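(* Let $\omega\in\Omega_+$, $-\infty\le x\le y_1\le y_2\le z\le\infty$ with $y_1,y_2\in\mathbb Z$, and $t\in[0,\infty]$. Then \[P_{y_1,\omega}[T_z\le T_x\wedge t]\le P_{y_2,\omega}[T_z\le T_x\wedge t].\]
   Context: Cookie environments: $\Omega_+=([1/2,1]^{\mathbb N})^{\mathbb Z}$. $P_{x,\omega}$ is the law of the nearest-neighbor process $(X_n)_{n\ge0}$ with $X_0=x$ which, on its $i$-th visit to site $z$, jumps to $z+1$ with probability $\omega(z,i)$ and to $z-1$ otherwise. $T_k=\inf\{n\ge0:X_n=k\}$ for $k\in\mathbb Z$, and $T_\infty=T_{-\infty}=\infty$. *)

(* Defs.v *)
From HB Require Import structures.
From mathcomp Require Import all_boot all_order all_algebra.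
From mathcomp Require Import all_classical all_reals all_analysis.
Set Implicit Arguments. Unset Strict Implicit. Unset Printing Implicit Defensive.
Import Order.TTheory GRing.Theory Num.Theory.
Local Open Scope classical_set_scope.
Local Open Scope ring_scope.

Section Cookie.
Variable R : realType.

(* A cookie environment omega : int -> nat -> R; omega z k is the probability
   of jumping right on the (k+1)-th visit to z (visits indexed from 0). *)
Definition cookie_env_plus (omega : int -> nat -> R) : Prop :=
  forall (z : int) (k : nat), 1 / 2 <= omega z k <= 1.

(* Probability of the steps along a path, given the sites already visited
   ([past], excluding the current site [a]). *)
Fixpoint walk_prob (omega : int -> nat -> R) (past : seq int) (a : int)
    (rest : seq int) : R :=
  match rest with
  | [::] => 1
  | b :: rest' =>
      let k := count_mem a past in
      (if b == a + 1 then omega a k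
       else if b == a - 1 then 1 - omega a k else 0)
      * walk_prob omega (a :: past) b rest'
  end.

Definition cyl_prob (omega : int -> nat -> R) (y : int) (s : seq int) : R :=
  match s with
  | [::] => 1
  | a :: r => (a == y)%:R * walk_prob omega [::] a r
  end.

Definition cookie_walk_law d (T : measurableType d) (P : probability T R)
    (omega : int -> nat -> R) (y : int) (X : nat -> T -> int) : Prop :=
  (forall (n : nat) (k : int), measurable [set w | X n w = k]) /\
  (forall s : seq int,
     P [set w | forall i : nat, (i < size s)%N -> X i w = nth 0 s i]
     = (cyl_prob omega y s)%:E).

Definition hitT T (X : nat -> T -> int) (k : \bar int) (w : T) : \bar R :=
  match k with
  | EFin k0 => ereal_inf [set (n%:R)%:E | n in [set n : nat | X n w = k0]]
  | _ => +oo%E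
  end.

Definition hit_event T (X : nat -> T -> int) (x z : \bar int) (t : \bar R)
  : set T :=
  [set w | (hitT X z w <= Order.min (hitT X x w) t)%E].

End Cookie.

(* Main.v *)
Require Import Defs.
From HB Require Import structures.
From mathcomp Require Import all_boot all_order all_algebra.
From mathcomp Require Import all_classical all_reals all_analysis.
From mathcomp Require Import lra zify ring.
From Stdlib Require Import FunctionalExtensionality.
Import Order.TTheory GRing.Theory Num.Theory.
Local Open Scope classical_set_scope.
Local Open Scope ring_scope.

Module Aux.
Set Implicit Arguments. Unset Strict Implicit. Unset Printing Implicit Defensive.

Section Comb.
Variable R : realFieldType.
Implicit Types (w : int -> nat -> R).

Definition shiftw w (l : int) : int -> nat -> R :=
  fun u i => w u (i + (u == l))%N.

Fixpoint gg (x z : \bar int) (b0 : R) w (a : int) (n : nat) : R :=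
  if a%:E == z then 1 else if a%:E == x then 0 else
  match n with
  | 0 => b0
  | n'.+1 => w a 0%N * gg x z b0 (shiftw w a) (a + 1) n'
             + (1 - w a 0%N) * gg x z b0 (shiftw w a) (a - 1) n'
  end.

Definition in01 w := forall u i, 0 <= w u i <= 1.
Definition det w := forall u i, w u i = 0 \/ w u i = 1.

Lemma det_in01 w : det w -> in01 w.
Proof. by move=> h u i; case: (h u i) => ->; rewrite lexx ?ler01 ?ler01. Qed.

Lemma shift_in01 w l : in01 w -> in01 (shiftw w l).
Proof. by move=> h u i; apply: h. Qed.

Lemma shift_det w l : det w -> det (shiftw w l).
Proof. by move=> h u i; apply: h. Qed.

Lemma shiftwC w a b : shiftw (shiftw w a) b = shiftw (shiftw w b) a.
Proof.
apply: functional_extensionality_dep => u; apply: functional_extensionality_dep => i.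
by rewrite /shiftw -!addnA [((u == b) + _)%N]addnC.
Qed.

Lemma gg_bnd x z b0 w a n : in01 w -> 0 <= b0 <= 1 -> 0 <= gg x z b0 w a n <= 1.
Proof.
elim: n w a => [|n IH] w a hw hb /=.
  by case: ifP => _; [rewrite ler01 lexx|case: ifP => _ //; rewrite lexx ler01].
case: ifP => _; first by rewrite ler01 lexx.
case: ifP => _; first by rewrite lexx ler01.
have /andP[h1 h2] := hw a 0%N.
have /andP[g1 g2] := IH (shiftw w a) (a+1) (shift_in01 a hw) hb.
have /andP[k1 k2] := IH (shiftw w a) (a-1) (shift_in01 a hw) hb.
apply/andP; split; first by rewrite addr_ge0 // mulr_ge0 // subr_ge0.
nra.
Qed.


Definition stp w (a : int) : int := if w a 0%N == 1 then a + 1 else a - 1.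

Lemma gg_det_step x z b0 w a n : det w -> a%:E != z -> a%:E != x ->
  gg x z b0 w a n.+1 = gg x z b0 (shiftw w a) (stp w a) n.
Proof.
move=> hd /negbTE hz /negbTE hx /=; rewrite hz hx /stp.
case: (hd a 0%N) => ->; first by rewrite eq_sym oner_eq0 mul0r add0r subr0 mul1r.
by rewrite eqxx mul1r subrr mul0r addr0.
Qed.

Inductive PE (x : \bar int) (v : int) (e : int -> nat -> R) :
  int -> nat -> (int -> nat -> R) -> Prop :=
| PE0 : (x < (v-1)%:E)%E -> PE x v e (v-1) 0 e
| PES u k e' : PE x v e u k e' -> (x < (stp e' u)%:E)%E -> stp e' u < v ->
    PE x v e (stp e' u) k.+1 (shiftw e' u).

Lemma PE_inv0 x v e u e1 : PE x v e u 0 e1 -> [/\ u = v - 1, e1 = e & (x < (v-1)%:E)%E].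
Proof. by move=> h; inversion h. Qed.

Lemma PE_invS x v e u1 k e1 : PE x v e u1 k.+1 e1 ->
  exists u e', [/\ PE x v e u k e', u1 = stp e' u, e1 = shiftw e' u,
                 (x < u1%:E)%E & u1 < v].
Proof. by move=> h; inversion h; subst; exists u, e'; split. Qed.

Lemma PE_pos x v e u k e' : PE x v e u k e' -> (x < u%:E)%E /\ u < v.
Proof. by case=> [h|u0 k0 e0 _ h1 h2] //; split=> //; rewrite ltrBlDr ltrDl. Qed.

Lemma PE_xv x v e u k e' : PE x v e u k e' -> (x < (v-1)%:E)%E.
Proof. by elim. Qed.

Lemma PE_det x v e k u u' e1 e2 : PE x v e u k e1 -> PE x v e u' k e2 -> u = u' /\ e1 = e2.
Proof.
elim: k u u' e1 e2 => [|k IH] u u' e1 e2.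
  by move=> /PE_inv0 [-> -> _] /PE_inv0 [-> -> _].
move=> /PE_invS [u0 [e0 [h0 -> -> _ _]]] /PE_invS [u1 [e3 [h1 -> -> _ _]]].
by have [-> ->] := IH _ _ _ _ h0 h1.
Qed.

Lemma PE_prefix x v e u k e' : PE x v e u k e' -> forall j, (j <= k)%N ->
  exists u1 e1, PE x v e u1 j e1.
Proof.
elim=> [h|u0 k0 e0 h0 IH h1 h2] j hj.
  by move: hj; rewrite leqn0 => /eqP ->; exists (v-1), e; constructor.
move: hj; rewrite leq_eqVlt => /orP [/eqP -> | hlt]; last by apply: IH.
by exists (stp e0 u0), (shiftw e0 u0); apply: PES.
Qed.

Lemma PE_up x v e u k e' : PE x v e u k e' -> forall s, v <= s -> e' s = e s.
Proof.
elim=> // u0 k0 e0 h0 IH _ _ s hs.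
have [_ hu] := PE_pos h0.
apply: functional_extensionality_dep => i; rewrite /shiftw.
have -> : (s == u0) = false by apply/negbTE; rewrite gt_eqF // (lt_le_trans hu hs).
by rewrite addn0 IH.
Qed.

Lemma stp_shift w u s : u != s -> stp (shiftw w s) u = stp w u.
Proof. by move=> /negbTE h; rewrite /stp /shiftw h addn0. Qed.

Lemma PE_shift x v e u k e' s : PE x v e u k e' -> v <= s ->
  PE x v (shiftw e s) u k (shiftw e' s).
Proof.
move=> h hs; elim: h => [h|u0 k0 e0 h0 IH h1 h2]; first by constructor.
have [_ hu] := PE_pos h0.
have hne : u0 != s by rewrite lt_eqF // (lt_le_trans hu hs).
rewrite shiftwC -(stp_shift e0 hne); constructor => //; by rewrite stp_shift.
Qed.

Lemma PE_det_env x v e u k e' : det e -> PE x v e u k e' -> det e'.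
Proof. by move=> hd; elim=> // u0 k0 e0 _ IH _ _; apply: shift_det. Qed.

Definition CE x v a (r : nat) b := exists k u e',
  [/\ r = k.+1, PE x v a u k e', stp e' u = v & b = shiftw e' u].


Lemma gg_at_z x z b0 w a n : a%:E = z -> gg x z b0 w a n = 1.
Proof. by move=> h; case: n => [|n] /=; rewrite h eqxx. Qed.

Lemma gg_at_x x z b0 w a n : a%:E != z -> a%:E = x -> gg x z b0 w a n = 0.
Proof. by move=> /negbTE h1 h2; case: n => [|n] /=; rewrite h1 h2 eqxx. Qed.

Lemma gg_at_0 x z b0 w a : a%:E != z -> a%:E != x -> gg x z b0 w a 0 = b0.
Proof. by move=> /negbTE h1 /negbTE h2 /=; rewrite h1 h2. Qed.

Lemma stp_cases w a : stp w a = a + 1 \/ stp w a = a - 1.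
Proof. by rewrite /stp; case: ifP; [left|right]. Qed.

Lemma step_x (x : \bar int) u u' : (x < u%:E)%E -> u' = u + 1 \/ u' = u - 1 ->
  u'%:E = x \/ (x < u'%:E)%E.
Proof.
case: x => [x0| |] /=; [| by rewrite ltNge leey | by move=> _ _; right; rewrite ltNyr].
rewrite ?lte_fin => h [->|->]; [right|]; rewrite ?lte_fin.
  by lia.
have [->|hne] := eqVneq (u - 1) x0; first by left.
by right; rewrite ?lte_fin; lia.
Qed.

Lemma ltE_ne (p q : \bar int) : (p < q)%E -> q != p.
Proof. by move=> h; rewrite gt_eqF. Qed.

Lemma ltE_ne2 (p q : \bar int) : (p < q)%E -> p != q.
Proof. by move=> h; rewrite lt_eqF. Qed.

Lemma det_main x z : forall S nL nU, (nL + nU)%N = S ->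
  [/\ (forall v eU u k eL, (v%:E <= z)%E -> det eU -> PE x v eU u k eL ->
         nU = (nL + k)%N -> gg x z 0 eL u nL <= gg x z 0 eU v nU),
      (forall v a b r q, (v%:E <= z)%E -> det a -> CE x v a r b -> v <= q ->
         nU = (nL + r)%N -> gg x z 0 b q nL <= gg x z 0 a q nU)
    & (forall v a b r u j a2, (v%:E <= z)%E -> det a -> CE x v a r b ->
         PE x v a u j a2 -> (j < r)%N -> (nU + j = nL + r)%N ->
         gg x z 0 b (v-1) nL <= gg x z 0 a2 u nU)].
Proof.
have G0 : forall w a n, det w -> 0 <= gg x z 0 w a n.
  move=> w a n hd.
  have hb : 0 <= (0:R) <= 1 by rewrite lexx ler01.
  by have /andP[] := gg_bnd x z a n (det_in01 hd) hb.
elim/ltn_ind => S IH nL nU hS.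
split.
-
  move=> v eU u k eL hvz hd hPE hnU.
  have [hxu huv] := PE_pos hPE.
  have hdL : det eL := PE_det_env hd hPE.
  have huz : u%:E != z.
    by apply: ltE_ne2; apply: (lt_le_trans _ hvz); rewrite lte_fin.
  have hux : u%:E != x by apply: ltE_ne.
  case: nL hS hnU => [|m] hS hnU; first by rewrite gg_at_0 // G0.
  rewrite gg_det_step //.
  set u' := stp eL u.
  have hxz : (x < z)%E by apply: (lt_trans hxu); apply: (lt_le_trans _ hvz); rewrite lte_fin.
  case: (step_x hxu (stp_cases eL u)) => [hx'|hx'].
    have hu'z : u'%:E != z by rewrite hx'; apply: ltE_ne2.
    by rewrite (gg_at_x _ _ _ hu'z hx') G0.
  have hu'v : u' <= v by rewrite /u'; case: (stp_cases eL u) => ->; lia.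
  have [hv|hne] := eqVneq u' v.
    have hCE : CE x v eU k.+1 (shiftw eL u) by exists k, u, eL; split.
    rewrite hv.
    have [_ R3 _] := IH (m + nU)%N ltac:(lia) m nU erefl.
    by apply: (R3 v eU _ k.+1 v) => //; lia.
  have hPE' : PE x v eU u' k.+1 (shiftw eL u).
    by apply: PES => //; rewrite lt_neqAle hne hu'v.
  have [R2 _ _] := IH (m + nU)%N ltac:(lia) m nU erefl.
  by apply: (R2 v eU u' k.+1) => //; lia.
-
  move=> v a b r q hvz hd [k [u [e' [hr hPE hst hb]]]] hvw hnU.
  have [hxu huv] := PE_pos hPE.
  have hxv : (x < v%:E)%E by apply: (lt_trans hxu); rewrite lte_fin.
  have hde : det e' := PE_det_env hd hPE.
  have hdb : det b by rewrite hb; apply: shift_det.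
  have [hz|hz] := eqVneq (q%:E) z; first by rewrite !gg_at_z.
  have hwx : q%:E != x by apply: ltE_ne; apply: (lt_le_trans hxv); rewrite lee_fin.
  case: nL hS hnU => [|m] hS hnU; first by rewrite gg_at_0 // G0.
  have -> : nU = (m + r).+1 by lia.
  rewrite !gg_det_step //.
  have hwu : q != u by rewrite gt_eqF // (lt_le_trans huv hvw).
  have hstb : stp b q = stp a q.
    by rewrite hb stp_shift // /stp (PE_up hPE hvw).
  rewrite hstb; set q2 := stp a q.
  have hCE' : CE x v (shiftw a q) r (shiftw b q).
    exists k, u, (shiftw e' q); split => //.
    - exact: PE_shift.
    - by rewrite stp_shift // eq_sym.
    - by rewrite hb shiftwC.
  have [hvq2|hlt] := boolP (v <= q2).
    have [_ R3 _] := IH (m + (m+r))%N ltac:(lia) m (m + r)%N erefl.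
    by apply: (R3 v (shiftw a q) (shiftw b q) r q2) => //; first [by apply: shift_det | lia].
  have hq : q = v /\ q2 = v - 1 by case: (stp_cases a q) hlt; rewrite -/q2 => -> ?; lia.
  case: hq => hw1 hw2; rewrite hw2; rewrite hw1 in hCE' *.
  have [_ _ R4] := IH (m + (m+r))%N ltac:(lia) m (m + r)%N erefl.
  apply: (R4 v (shiftw a v) _ r (v-1) 0%N) => //.
  + exact: shift_det.
  + by constructor; apply: (PE_xv hPE).
  + by rewrite hr.
  + by rewrite addn0.
-
  move=> v a b r u j a2 hvz hd [k [u0 [e0 [hr hPE0 hst hb]]]] hPE hj hn.
  have [hxu huv] := PE_pos hPE.
  have huz : u%:E != z.
    by apply: ltE_ne2; apply: (lt_le_trans _ hvz); rewrite lte_fin.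
  have hux : u%:E != x by apply: ltE_ne.
  have hd2 : det a2 := PE_det_env hd hPE.
  case: nU hS hn => [|m] hS hn; first by lia.
  rewrite gg_det_step //.
  have [hjk|hjk] : j = k \/ (j < k)%N by lia.
    subst j; have [hu ha] := PE_det hPE hPE0; subst u a2.
    rewrite hst -hb.
    have -> : m = nL by lia.
    have [R2 _ _] := IH (nL + nL)%N ltac:(lia) nL nL erefl.
    apply: (R2 v b (v-1) 0%N b) => //.
    + by rewrite hb; apply: shift_det; apply: (PE_det_env hd hPE0).
    + by constructor; apply: (PE_xv hPE0).
    + by rewrite addn0.
  have [u1 [e1 h1]] := PE_prefix hPE0 hjk.
  have [u2 [e2 [h2 hu1 he1 hx1 hv1]]] := PE_invS h1.
  have [hu2 he2] := PE_det h2 hPE; subst u2 e2.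
  have [_ _ R4] := IH (nL + m)%N ltac:(lia) nL m erefl.
  apply: (R4 v a b r (stp a2 u) j.+1 (shiftw a2 u)) => //.
  + by exists k, u0, e0; split.
  + by rewrite -hu1 -he1.
  + by rewrite hr; lia.
  + by rewrite hr in hn *; lia.
Qed.


Lemma det_mono x z w v n : det w -> (x <= (v-1)%:E)%E -> (v%:E <= z)%E ->
  gg x z 0 w (v-1) n <= gg x z 0 w v n.
Proof.
move=> hd hx hz.
have G0 : 0 <= gg x z 0 w v n.
  have hb : 0 <= (0:R) <= 1 by rewrite lexx ler01.
  by have /andP[] := gg_bnd x z v n (det_in01 hd) hb.
have hvz : (v-1)%:E != z.
  apply: ltE_ne2; apply: (lt_le_trans _ hz); rewrite lte_fin; lia.
move: hx; rewrite le_eqVlt => /orP [/eqP hx|hx].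
  by rewrite gg_at_x.
have [R2 _ _] := @det_main x z _ n n erefl.
by apply: (R2 v w (v-1) 0%N w) => //; [constructor|rewrite addn0].
Qed.

Definition upd w (p : int * nat) (c : R) : int -> nat -> R :=
  fun u i => if (u, i) == p then c else w u i.

Lemma shift_upd_same w a c : shiftw (upd w (a, 0%N) c) a = shiftw w a.
Proof.
apply: functional_extensionality_dep => u; apply: functional_extensionality_dep => j.
rewrite /shiftw /upd xpair_eqE.
by case: (eqVneq u a) => [->|hne] //=; rewrite addn1.
Qed.

Lemma shift_upd w a s i c : ~~ ((s == a) && (i == 0%N)) ->
  shiftw (upd w (s, i) c) a = upd (shiftw w a) (s, (i - (s == a))%N) c.
Proof.
move=> h; apply: functional_extensionality_dep => u; apply: functional_extensionality_dep => j.
rewrite /shiftw /upd !xpair_eqE; case: (eqVneq u s) => [->|] //=.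
congr (if _ then _ else _).
case: (eqVneq s a) h => [? | _] /= h; last by rewrite addn0 subn0.
subst.
by case: i h => // i _; rewrite addn1 subn1 /= eqSS.
Qed.

Lemma gg_aff x z b0 n : forall w a s i c,
  gg x z b0 (upd w (s, i) c) a n =
  (1 - c) * gg x z b0 (upd w (s, i) 0) a n + c * gg x z b0 (upd w (s, i) 1) a n.
Proof.
elim: n => [|n IH] w a s i c /=.
  by case: ifP => _; [|case: ifP => _]; ring.
case: ifP => _; first ring.
case: ifP => _; first ring.
have [/andP[/eqP hs /eqP hi]|hne] := boolP ((s == a) && (i == 0%N)).
  subst s i; rewrite !shift_upd_same /upd !eqxx.
  ring.
rewrite !shift_upd //.
have hup : forall c', upd w (s, i) c' a 0%N = w a 0%N.
  move=> c'; rewrite /upd xpair_eqE.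
  by case: ifP => // /andP[/eqP h1 /eqP h2]; rewrite h1 -h2 !eqxx in hne.
rewrite !hup (IH _ (a+1) _ _ c) (IH _ (a-1) _ _ c).
ring.
Qed.

Lemma gg_loc x z b0 n : forall w w' a,
  (forall u i, (i < n)%N -> a - n%:Z <= u <= a + n%:Z -> w u i = w' u i) ->
  gg x z b0 w a n = gg x z b0 w' a n.
Proof.
elim: n => [|n IH] w w' a h //=.
case: ifP => // _; case: ifP => // _.
have -> : w a 0%N = w' a 0%N by apply: h => //; lia.
congr (_ * _ + _ * _); apply: IH => u i hi hu; rewrite /shiftw; apply: h; by case: (u == a); lia.
Qed.

Lemma cover (lo : int) (n m : nat) : exists L : seq (int * nat),
  forall u i, (i < n)%N -> lo <= u < lo + m%:Z -> (u, i) \in L.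
Proof.
elim: m => [|m [L hL]].
  by exists [::] => u i _; lia.
exists ([seq (lo + m%:Z, i) | i <- iota 0 n] ++ L) => u i hi hu.
rewrite mem_cat; have [->|hne] := eqVneq u (lo + m%:Z).
  by rewrite map_f // mem_iota.
by rewrite hL ?orbT //; lia.
Qed.

Lemma lift01 x z n a :
  (forall w, det w -> gg x z 0 w a n <= gg x z 0 w (a+1) n) ->
  forall w, in01 w -> gg x z 0 w a n <= gg x z 0 w (a+1) n.
Proof.
move=> hdet.
pose inbox u i := (i < n)%N && (a - n%:Z <= u <= a + 1 + n%:Z).
have claim : forall (L : seq (int * nat)) w, in01 w ->
    (forall u i, inbox u i -> (u, i) \in L \/ (w u i = 0 \/ w u i = 1)) ->
    gg x z 0 w a n <= gg x z 0 w (a+1) n.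
  elim=> [|[s i] L IH] w hw hL.
    pose w1 u i := if inbox u i then w u i else 0.
    have hd1 : det w1.
      move=> u i; rewrite /w1; case: ifP => hb; last by left.
      by case: (hL u i hb).
    rewrite (@gg_loc _ _ _ _ w w1) ?(@gg_loc _ _ _ _ w w1 (a+1)); first exact: hdet.
    + by move=> u i hi hu; rewrite /w1 /inbox hi /=; case: ifP => //; lia.
    + by move=> u i hi hu; rewrite /w1 /inbox hi /=; case: ifP => //; lia.
  set c := w s i.
  have hw' : w = upd w (s, i) c.
    apply: functional_extensionality_dep => u; apply: functional_extensionality_dep => j.
    by rewrite /upd xpair_eqE; case: eqVneq => [->|] //=; case: eqVneq => [->|].
  have hu01 : forall c', c' = 0 \/ c' = 1 -> in01 (upd w (s, i) c') /\
     (forall u j, inbox u j -> (u, j) \in L \/ (upd w (s, i) c' u j = 0 \/ upd w (s, i) c' u j = 1)).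
    move=> c' hc'; split.
      move=> u j; rewrite /upd; case: ifP => _; last exact: hw.
      by case: hc' => ->; rewrite lexx ler01.
    move=> u j hb; rewrite /upd; case: ifP => [_|hne]; first by right.
    case: (hL u j hb) => [|]; last by right.
    by rewrite in_cons hne /=; left.
  have [h0a h0b] := hu01 0 (or_introl erefl).
  have [h1a h1b] := hu01 1 (or_intror erefl).
  have H0 := IH _ h0a h0b; have H1 := IH _ h1a h1b.
  have E : forall a', gg x z 0 w a' n = (1 - c) * gg x z 0 (upd w (s, i) 0) a' n
      + c * gg x z 0 (upd w (s, i) 1) a' n.
    by move=> a'; rewrite {1}hw' gg_aff.
  have /andP[c0 c1] := hw s i.
  rewrite !E; apply: lerD; apply: ler_wpM2l => //; by rewrite subr_ge0.
have [L hL] := cover (a - n%:Z) n (2 * n + 2).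
move=> w hw; apply: (claim L w hw) => u i /andP[hi hu]; left; apply: hL => //; lia.
Qed.


Lemma mono0 x z w a n : in01 w -> (x <= a%:E)%E -> ((a+1)%:E <= z)%E ->
  gg x z 0 w a n <= gg x z 0 w (a+1) n.
Proof.
move=> hw hx hz; apply: lift01 => // w' hd.
have := @det_mono x z w' (a+1) n hd; rewrite addrK; apply => //.
Qed.

Definition refl w : int -> nat -> R := fun s i => 1 - w (-s) i.

Lemma refl_in01 w : in01 w -> in01 (refl w).
Proof.
move=> h u i; have /andP[h1 h2] := h (-u) i.
by rewrite /refl subr_ge0 h2 lerBlDr lerDl h1.
Qed.

Lemma shift_refl w a : shiftw (refl w) (-a) = refl (shiftw w a).
Proof.
apply: functional_extensionality_dep => u; apply: functional_extensionality_dep => j.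
by rewrite /shiftw /refl eqr_oppLR.
Qed.

Lemma gg_refl x z n : x != z -> forall w a,
  gg x z 1 w a n = 1 - gg (- z)%E (- x)%E 0 (refl w) (-a) n.
Proof.
move=> hxz; elim: n => [|n IH] w a /=; rewrite !EFinN !eqe_opp.
  case: (eqVneq (a%:E) z) => [hz|hz].
    by rewrite hz eq_sym (negbTE hxz) subr0.
  by case: (eqVneq (a%:E) x) => _ /=; rewrite ?subrr ?subr0.
case: (eqVneq (a%:E) z) => [hz|hz].
  by rewrite hz eq_sym (negbTE hxz) subr0.
case: (eqVneq (a%:E) x) => _ /=; first by rewrite subrr.
rewrite !IH shift_refl /refl opprK.
have -> : - a + 1 = - (a - 1) by rewrite opprB addrC.
have -> : - a - 1 = - (a + 1) by rewrite opprD.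
ring.
Qed.

Lemma mono1 x z w a n : in01 w -> (x <= a%:E)%E -> ((a+1)%:E <= z)%E ->
  gg x z 1 w a n <= gg x z 1 w (a+1) n.
Proof.
move=> hw hx hz.
have hxz : x != z.
  apply: ltE_ne2; apply: (le_lt_trans hx); apply: (lt_le_trans _ hz).
  by rewrite lte_fin ltrDl.
rewrite !gg_refl // lerD2l lerN2.
have h1 : (- z <= (- (a+1))%:E)%E by rewrite EFinN leeN2.
have h2 : ((- (a+1) + 1)%:E <= - x)%E by rewrite opprD addrNK EFinN leeN2.
by have := @mono0 (- z)%E (- x)%E (refl w) (- (a+1)) n (refl_in01 hw) h1 h2; rewrite opprD addrNK.
Qed.

Lemma mono_gen x z b0 w y1 y2 n : in01 w -> (b0 = 0 \/ b0 = 1) ->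
  (x <= y1%:E)%E -> y1 <= y2 -> (y2%:E <= z)%E ->
  gg x z b0 w y1 n <= gg x z b0 w y2 n.
Proof.
move=> hw hb hx h12 hz.
have [k hk] : exists k : nat, y2 = y1 + k%:Z by exists `|y2 - y1|%N; lia.
subst y2; clear h12; elim: k hz => [|k IH] hz; first by rewrite addr0.
have hz' : ((y1 + k%:Z)%:E <= z)%E by apply: le_trans hz; rewrite lee_fin; lia.
apply: le_trans (IH hz') _.
have -> : y1 + k.+1%:Z = (y1 + k%:Z) + 1 by lia.
have hx' : (x <= (y1 + k%:Z)%:E)%E by apply: (le_trans hx); rewrite lee_fin; lia.
have hz'' : (((y1 + k%:Z) + 1)%:E <= z)%E by apply: le_trans hz; rewrite lee_fin; lia.
by case: hb => ->; [apply: mono0 | apply: mono1].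
Qed.

End Comb.

Section Hit.
Variables (R : realType) (T : Type) (X : nat -> T -> int).

Definition hits (k : \bar int) w j := k = (X j w)%:E.

Lemma hitT_cases k w :
  (exists i0, [/\ hits k w i0, (forall j, hits k w j -> (i0 <= j)%N)
       & hitT R X k w = (i0%:R)%:E]) \/
  ((forall j, ~ hits k w j) /\ hitT R X k w = +oo%E).
Proof.
case: k => [k0| |]; last 2 first.
- by right; split.
- by right; split.
case: (pselect (exists j, X j w = k0)) => [hex|hne].
- left.
  have hex' : exists j, X j w == k0 by case: hex => j hj; exists j; apply/eqP.
  case: (ex_minnP hex') => i0 /eqP hi0 hmin.
  exists i0; split.
  + by rewrite /hits hi0.
  + by move=> j [hj]; apply: hmin; rewrite hj.
  + rewrite /hitT; apply/le_anti/andP; split.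
      by apply: ge_ereal_inf; exists (i0%:R)%:E => //; exists i0.
    apply: le_ereal_inf_tmp => e [j hj <-].
    by rewrite lee_fin ler_nat; apply: hmin; apply/eqP.
- right; split.
    by move=> j [hj]; apply: hne; exists j.
  rewrite /hitT.
  have -> : [set n : nat | X n w = k0] = set0.
    by apply/seteqP; split => // n /= hn; apply: hne; exists n.
  by rewrite image_set0 ereal_inf0.
Qed.

Lemma hitT_le_r k w (r : R) :
  (hitT R X k w <= r%:E)%E <-> exists i, hits k w i /\ (i%:R <= r).
Proof.
case: (hitT_cases k w) => [[i0 [h0 hmin ->]]|[hn ->]].
  rewrite lee_fin; split; first by move=> h; exists i0.
  move=> [i [hi hr]]; apply: le_trans hr; rewrite ler_nat; exact: hmin.
split; first by rewrite leNgt ltey.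
by move=> [i [hi _]]; case: (hn i).
Qed.

Lemma hitT_le_hitT kz kx w :
  (hitT R X kz w <= hitT R X kx w)%E <->
  (forall j, hits kx w j -> exists i, (i <= j)%N /\ hits kz w i).
Proof.
case: (hitT_cases kx w) => [[i0 [h0 hmin ->]]|[hn ->]].
  rewrite hitT_le_r; split.
    move=> [i [hi hr]] j hj; exists i; split => //.
    by apply: leq_trans (hmin _ hj); rewrite -(ler_nat R).
  move=> h; case: (h i0 h0) => i [hi1 hi2]; exists i; split => //.
  by rewrite ler_nat.
split => // _; first by move=> j hj; case: (hn j).
by rewrite leey.
Qed.

End Hit.

Fixpoint evb (x z : \bar int) (b0 : bool) (s : seq int) : bool :=
  match s with
  | [::] => b0
  | a :: r => if a%:E == z then true else if a%:E == x then false else evb x z b0 r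
  end.

Lemma mkseqS' (T : Type) (f : nat -> T) n : mkseq f n.+1 = f 0%N :: mkseq (fun i => f i.+1) n.
Proof. by elim: n => [|n IH] //; rewrite mkseqS IH mkseqS. Qed.

Lemma evb_char x z b0 (f : nat -> int) N :
  evb x z b0 (mkseq f N.+1) <->
  (exists i, [/\ (i <= N)%N, z = (f i)%:E & forall j, (j < i)%N -> x <> (f j)%:E]) \/
  (b0 /\ forall i, (i <= N)%N -> z <> (f i)%:E /\ x <> (f i)%:E).
Proof.
elim: N f => [|N IH] f; rewrite mkseqS' /=.
  case: (eqVneq (f 0%N)%:E z) => [hz|hz].
    by split => // _; left; exists 0%N; split.
  case: (eqVneq (f 0%N)%:E x) => [hx|hx].
    split => //; case=> [[i [hi hzi _]]|[_ h]].
      by move: hi; rewrite leqn0 => /eqP hi; subst i; rewrite hzi eqxx in hz.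
    by case: (h 0%N) => // _ []; rewrite hx.
  split.
    by move=> hb; right; split => // i; rewrite leqn0 => /eqP ->; split;
      [move=> h; rewrite h eqxx in hz|move=> h; rewrite h eqxx in hx].
  case=> [[i [hi hzi _]]|[hb _]] //.
  by move: hi; rewrite leqn0 => /eqP hi; subst i; rewrite hzi eqxx in hz.
case: (eqVneq (f 0%N)%:E z) => [hz|hz].
  by split => // _; left; exists 0%N; split.
case: (eqVneq (f 0%N)%:E x) => [hx|hx].
  split => //; case=> [[i [hi hzi hj]]|[_ h]].
    case: i hi hzi hj => [|i] hi hzi hj; first by rewrite hzi eqxx in hz.
    by case: (hj 0%N).
  by case: (h 0%N) => // _ []; rewrite hx.
rewrite (IH (fun i => f i.+1)); split.
- case=> [[i [hi hzi hj]]|[hb h]].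
    left; exists i.+1; split => //.
    case=> [|j] hji; first by move=> h; rewrite h eqxx in hx.
    exact: hj.
  right; split => //; case=> [|i] hi.
    by split => h0; [rewrite h0 eqxx in hz|rewrite h0 eqxx in hx].
  exact: h.
- case=> [[i [hi hzi hj]]|[hb h]].
    case: i hi hzi hj => [|i] hi hzi hj; first by rewrite hzi eqxx in hz.
    by left; exists i; split => // j hji; apply: hj.
  by right; split => // i hi; apply: h.
Qed.

Section HitEv.
Variables (R : realType) (T : Type) (X : nat -> T -> int).

Lemma hit_event_fin x z (r : R) : 0 <= r ->
  hit_event X x z (r%:E) =
  [set w | evb x z false (mkseq (fun i => X i w) (Num.truncn r).+1)].
Proof.
move=> r0; apply/seteqP; split => w /=.
  rewrite /hit_event /= le_min => /andP [/hitT_le_hitT hzx /hitT_le_r [i [hi hir]]].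
  apply/evb_char; left.
  case: (hitT_cases R X z w) => [[i0 [h0 hmin _]]|[hn _]]; last by case: (hn i).
  exists i0; split => //.
  - by rewrite truncn_ge_nat //; apply: le_trans hir; rewrite ler_nat; apply: hmin.
  - move=> j hj hxj; case: (hzx j hxj) => i1 [hi1 hz1].
    by have := hmin _ hz1; lia.
move=> /evb_char [[i [hi hzi hj]]|[]] //.
rewrite /hit_event /= le_min; apply/andP; split.
  apply/hitT_le_hitT => j hxj; exists i; split => //.
  by rewrite leqNgt; apply/negP => hji; apply: (hj j hji).
by apply/hitT_le_r; exists i; split => //; rewrite -truncn_ge_nat.
Qed.

Lemma hit_event_inf x z :
  hit_event (R:=R) X x z +oo%E =
  \bigcap_N [set w | evb x z true (mkseq (fun i => X i w) N.+1)].
Proof.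
apply/seteqP; split => w /=.
  rewrite /hit_event /= le_min leey andbT => /hitT_le_hitT hzx N _.
  apply/evb_char.
  case: (hitT_cases R X z w) => [[i0 [h0 hmin _]]|[hn _]].
    case: (leqP i0 N) => hiN.
      left; exists i0; split => // j hj hxj; case: (hzx j hxj) => i1 [hi1 hz1].
      by have := hmin _ hz1; lia.
    right; split => // i hi; split => [hzi|hxi].
      by have := hmin _ hzi; lia.
    case: (hzx i hxi) => i1 [hi1 hz1]; by have := hmin _ hz1; lia.
  right; split => // i hi; split => [hzi|hxi]; first by case: (hn i).
  by case: (hzx i hxi) => i1 [hi1 hz1]; case: (hn i1).
move=> h; rewrite /hit_event /= le_min leey andbT.
apply/hitT_le_hitT => j hxj.
have /evb_char [[i [hi hzi _]]|[_ hn]] := h j I.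
  by exists i.
by case: (hn j (leqnn j)).
Qed.

End HitEv.

Section WalkProb.
Variables (R : realType) (om : int -> nat -> R).

Definition Wt (c : nat) (l b : int) : R :=
  if b == l + 1 then om l c else if b == l - 1 then 1 - om l c else 0.

Lemma walk_prob_rcons past a rest b :
  walk_prob om past a (rcons rest b) =
  walk_prob om past a rest *
  Wt (count_mem (last a rest) past + count_mem (last a rest) (belast a rest))%N
     (last a rest) b.
Proof.
elim: rest past a => [|r0 rest IH] past a /=.
  by rewrite mulr1 mul1r addn0.
rewrite IH mulrA; congr (_ * Wt _ _ _).
by rewrite /=; lia.
Qed.

Definition envp (p : seq int) : int -> nat -> R := fun u i => om u (i + count_mem u p)%N.

Lemma envp_nil : envp [::] = om.
Proof.
apply: functional_extensionality_dep => u; apply: functional_extensionality_dep => i.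
by rewrite /envp /= addn0.
Qed.

Lemma envp_cons a0 r : envp (a0 :: r) = shiftw (envp (belast a0 r)) (last a0 r).
Proof.
apply: functional_extensionality_dep => u; apply: functional_extensionality_dep => i.
rewrite /envp /shiftw lastI -cats1 count_cat /= addn0 -addnA; congr (om u (_ + _)%N).
by rewrite addnC eq_sym.
Qed.

End WalkProb.

Section Meas.
Variables (R : realType) (d : measure_display) (T : measurableType d).
Variables (P : probability T R) (om : int -> nat -> R) (y : int) (X : nat -> T -> int).
Hypothesis hlaw : cookie_walk_law P om y X.

Definition cylS (s : seq int) := [set w | forall i, (i < size s)%N -> X i w = nth 0 s i].
Definition EvS x z b0 k n := [set w | evb x z b0 (mkseq (fun i => X (k + i)%N w) n.+1)].

Lemma pre_meas n (f : nat -> int) : measurable [set w | forall i, (i < n)%N -> X i w = f i].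
Proof.
elim: n => [|n IH].
  have -> : [set w | forall i, (i < 0)%N -> X i w = f i] = setT.
    by apply/seteqP; split => // w _ i.
  exact: measurableT.
have -> : [set w | forall i, (i < n.+1)%N -> X i w = f i] =
  [set w | forall i, (i < n)%N -> X i w = f i] `&` [set w | X n w = f n].
  apply/seteqP; split => w /=.
  - by move=> h; split => [i hi|]; apply: h; lia.
  - by move=> [h1 h2] i; rewrite ltnS leq_eqVlt => /orP [/eqP ->|hi] //; apply: h1.
by apply: measurableI => //; exact: hlaw.1.
Qed.

Lemma cylS_meas s : measurable (cylS s).
Proof. exact: pre_meas. Qed.

Lemma eqE_meas k (e : \bar int) : measurable [set w | (X k w)%:E == e].
Proof.
case: e => [e0| |].
- have -> : [set w | (X k w)%:E == e0%:E] = [set w | X k w = e0].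
    by apply/seteqP; split => w /=; [move/eqP => [] | move=> ->].
  exact: hlaw.1.
- have -> : [set w | ((X k w)%:E == +oo)%E] = set0 by apply/seteqP; split => w.
  exact: measurable0.
- have -> : [set w | ((X k w)%:E == -oo)%E] = set0 by apply/seteqP; split => w.
  exact: measurable0.
Qed.

Lemma ite_meas (b1 b2 b3 : T -> bool) : measurable [set w | b1 w] ->
  measurable [set w | b2 w] -> measurable [set w | b3 w] ->
  measurable [set w | if b1 w then true else if b2 w then false else b3 w].
Proof.
move=> h1 h2 h3.
have -> : [set w | if b1 w then true else if b2 w then false else b3 w] =
  [set w | b1 w] `|` ((~` [set w | b1 w]) `&` (~` [set w | b2 w]) `&` [set w | b3 w]).
  apply/seteqP; split => w /=.
    by case: (b1 w) => /=; [left|case: (b2 w) => //= h; right].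
  case: (b1 w) => //=; case=> // [[[]]] //.
  by move=> h; case: (b2 w) h => //= h _ ->.
apply: measurableU => //; apply: measurableI => //; apply: measurableI => //;
  exact: measurableC.
Qed.

Lemma evS_eq x z b0 k n w :
  evb x z b0 (mkseq (fun i => X (k + i)%N w) n.+2) =
  (if (X k w)%:E == z then true else if (X k w)%:E == x then false
   else evb x z b0 (mkseq (fun i => X (k.+1 + i)%N w) n.+1)).
Proof.
rewrite mkseqS'.
have -> : mkseq (fun i => X (k + i.+1)%N w) n.+1 = mkseq (fun i => X (k.+1 + i)%N w) n.+1.
  by apply: eq_mkseq => i; rewrite addSnnS.
by rewrite /= addn0.
Qed.

Lemma EvS_meas x z b0 n : forall k, measurable (EvS x z b0 k n).
Proof.
elim: n => [|n IH] k.
  rewrite /EvS /=; rewrite addn0.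
  apply: ite_meas; try exact: eqE_meas.
  case: b0.
  - have -> : [set _ : T | true] = setT by apply/seteqP; split.
    exact: measurableT.
  - have -> : [set _ : T | false] = set0 by apply/seteqP; split.
    exact: measurable0.
have -> : EvS x z b0 k n.+1 = [set w | if (X k w)%:E == z then true else
    if (X k w)%:E == x then false else evb x z b0 (mkseq (fun i => X (k.+1 + i)%N w) n.+1)].
  by apply/seteqP; split => w /= h; [rewrite -evS_eq | rewrite -evS_eq in h].

by apply: ite_meas; [exact: eqE_meas|exact: eqE_meas|exact: IH].
Qed.


Lemma cylS_rcons a0 r b :
  cylS (a0 :: rcons r b) = cylS (a0 :: r) `&` [set w | X (size r).+1 w = b].
Proof.
apply/seteqP; split => w /=.
- move=> h; split.
  + move=> i hi.
    have hi2 : (i < size (a0 :: rcons r b))%N by rewrite /= size_rcons; move: hi => /=; lia.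
    by rewrite (h i hi2) -rcons_cons nth_rcons hi.
  + have hi2 : ((size r).+1 < size (a0 :: rcons r b))%N by rewrite /= size_rcons.
    by rewrite (h _ hi2) -rcons_cons nth_rcons /= ltnn eqxx.
- move=> [h1 h2] i; rewrite -rcons_cons nth_rcons size_rcons => hi.
  case: ltnP => hi'; first exact: h1.
  have -> : i = (size r).+1 by move: hi hi' => /=; lia.
  by rewrite /= eqxx.
Qed.

Lemma Xlast a0 r w : cylS (a0 :: r) w -> X (size r) w = last a0 r.
Proof.
move=> h; rewrite (h (size r)) //.
by have := nth_last 0 (a0 :: r); rewrite /= => ->.
Qed.

Lemma setI_if (C E : set T) (b : bool) : (forall w, C w -> (E w <-> b)) ->
  C `&` E = if b then C else set0.
Proof.
move=> h; apply/seteqP; split => w.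
  by move=> [hc he]; have hb := (h w hc).1 he; rewrite hb.
case: b h => h //= hc; split => //; exact/(h w hc).
Qed.

Lemma split_meas (C C1 C2 E : set T) (c : R) : measurable C -> measurable C1 ->
  measurable C2 -> measurable E -> C1 `<=` C -> C2 `<=` C -> C1 `&` C2 = set0 ->
  P C = c%:E -> (P C1 + P C2 = c%:E)%E ->
  P (C `&` E) = (P (C1 `&` E) + P (C2 `&` E))%E.
Proof.
move=> mC m1 m2 mE s1 s2 dis hC h12.
have mD : measurable (C1 `|` C2) by apply: measurableU.
have hD : P (C1 `|` C2) = c%:E by rewrite measureU.
have hCD : P (C `\` (C1 `|` C2)) = 0%E.
  rewrite measureD //; last by apply: (@le_lt_trans _ _ 1%E); [apply: probability_le1|exact: ltry].
  rewrite setIidr; last by move=> w [h|h]; [apply: s1|apply: s2].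
  transitivity (c%:E - c%:E)%E; first by congr (_ - _)%E.
  by rewrite subee.
have h0 : P ((C `&` E) `\` (C1 `|` C2)) = 0%E.
  apply/eqP; rewrite eq_le measure_ge0 andbT -hCD.
  apply: le_measure; rewrite ?inE.
  - by apply: measurableD => //; apply: measurableI.
  - exact: measurableD.
  - by move=> w [[hc he] hn]; split.
have hS : (C `&` E) `&` (C1 `|` C2) = (C1 `&` E) `|` (C2 `&` E).
  apply/seteqP; split => w /=.
  - by move=> [[hc he] [h|h]]; [left|right].
  - by case=> [[h he]|[h he]]; split; [split => //; exact: s1 h | left | split => //; exact: s2 h | right].
have h3 : P ((C `&` E) `&` (C1 `|` C2)) = (P (C1 `&` E) + P (C2 `&` E))%E.
  rewrite hS measureU //; [exact: measurableI|exact: measurableI|].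
  apply/seteqP; split => // w [[h1 _] [h2 _]].
  have : (C1 `&` C2) w by split.
  by rewrite dis.
transitivity (0 + (P (C1 `&` E) + P (C2 `&` E)))%E; last by rewrite add0e.
rewrite (measureDI P (measurableI _ _ mC mE) mD).
by congr (_ + _)%E.
Qed.

Lemma rec_main x z (b0 : bool) n : forall r a0,
  P (cylS (a0 :: r) `&` EvS x z b0 (size r) n) =
  (cyl_prob om y (a0 :: r) * gg x z (b0%:R) (envp om (belast a0 r)) (last a0 r) n)%:E.
Proof.
elim: n => [|n IH] r a0; set l := last a0 r;
  have hC : P (cylS (a0 :: r)) = (cyl_prob om y (a0 :: r))%:E := hlaw.2 (a0 :: r).
  rewrite (@setI_if _ _ (if l%:E == z then true else if l%:E == x then false else b0)).
    rewrite /=; case: (l%:E == z) => /=; first by rewrite hC mulr1.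
    case: (l%:E == x) => /=; first by rewrite measure0 mulr0.
    by case: b0 => /=; [rewrite hC mulr1|rewrite measure0 mulr0].
  by move=> w hc; rewrite /EvS /= addn0 (Xlast hc).
have hE : forall w, cylS (a0 :: r) w -> (EvS x z b0 (size r) n.+1 w <->
   is_true (if l%:E == z then true else if l%:E == x then false
    else evb x z b0 (mkseq (fun i => X ((size r).+1 + i)%N w) n.+1))).
  move=> w hc; have e := evS_eq x z b0 (size r) n w; rewrite (Xlast hc) in e.
  by split => h; [rewrite -e; exact: h | rewrite -e in h; exact: h].
case: (eqVneq (l%:E) z) => [hz|hz].
  rewrite (@setI_if _ _ true); last first.
    by move=> w hc; apply: iff_trans (hE w hc) _; rewrite hz eqxx.
  by rewrite hC gg_at_z // mulr1.
case: (eqVneq (l%:E) x) => [hx|hx].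
  rewrite (@setI_if _ _ false); last first.
    by move=> w hc; apply: iff_trans (hE w hc) _; rewrite (negbTE hz) hx eqxx.
  by rewrite measure0 gg_at_x // mulr0.
have -> : cylS (a0 :: r) `&` EvS x z b0 (size r) n.+1 =
          cylS (a0 :: r) `&` EvS x z b0 (size r).+1 n.
  apply/seteqP; split => w [hc he]; split => //.
    by move: ((hE w hc).1 he); rewrite (negbTE hz) (negbTE hx).
  by apply/(hE w hc); rewrite (negbTE hz) (negbTE hx).
set c := count_mem l (belast a0 r).
have hcyl : forall b, cyl_prob om y (a0 :: rcons r b) = cyl_prob om y (a0 :: r) * Wt om c l b.
  by move=> b; rewrite /cyl_prob walk_prob_rcons /= add0n mulrA.
have hne : (l - 1 == l + 1) = false by apply/negbTE; apply/eqP; lia.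
have hW1 : Wt om c l (l+1) = om l c by rewrite /Wt eqxx.
have hW2 : Wt om c l (l-1) = 1 - om l c by rewrite /Wt hne eqxx.
have s1 : cylS (a0 :: rcons r (l+1)) `<=` cylS (a0 :: r) by rewrite cylS_rcons => w [].
have s2 : cylS (a0 :: rcons r (l-1)) `<=` cylS (a0 :: r) by rewrite cylS_rcons => w [].
have dis : cylS (a0 :: rcons r (l+1)) `&` cylS (a0 :: rcons r (l-1)) = set0.
  apply/seteqP; split => // w; rewrite !cylS_rcons => [[[_ h1] [_ h2]]].
  by move: h1 h2 => /= -> h; exfalso; lia.
have h12 : (P (cylS (a0 :: rcons r (l+1)%R)) + P (cylS (a0 :: rcons r (l-1)%R)) =
   (cyl_prob om y (a0 :: r))%:E)%E.
  have e1 : P (cylS (a0 :: rcons r (l+1))) = _ := hlaw.2 (a0 :: rcons r (l+1)).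
  have e2 : P (cylS (a0 :: rcons r (l-1))) = _ := hlaw.2 (a0 :: rcons r (l-1)).
  by rewrite e1 e2 !hcyl hW1 hW2 -EFinD; congr EFin; ring.
rewrite (split_meas (cylS_meas _) (cylS_meas _) (cylS_meas _) (EvS_meas _ _ _ _ _) s1 s2 dis hC h12).
have := IH (rcons r (l+1)) a0; rewrite size_rcons => ->.
have := IH (rcons r (l-1)) a0; rewrite size_rcons => ->.
rewrite !hcyl hW1 hW2 !belast_rcons !last_rcons -EFinD /= (negbTE hz) (negbTE hx).
rewrite -envp_cons /envp /= add0n -/c.
congr EFin; ring.
Qed.

Lemma prob_EvS x z (b0 : bool) N :
  P (EvS x z b0 0 N) = (gg x z b0%:R om y N)%:E.
Proof.
have h := rec_main x z b0 N [::] y.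
rewrite /= envp_nil in h.
have hC : P (cylS [:: y]) = 1%E.
  by have := hlaw.2 [:: y]; rewrite /cyl_prob /= eqxx mulr1.
have mC := cylS_meas [:: y].
have mE := EvS_meas x z b0 N 0.
have h0 : P (EvS x z b0 0 N `\` cylS [:: y]) = 0%E.
  apply/eqP; rewrite eq_le measure_ge0 andbT.
  have hT : P (setT `\` cylS [:: y]) = 0%E.
    rewrite measureD //; last by apply: (@le_lt_trans _ _ 1%E); [apply: probability_le1|exact: ltry].
    transitivity ((1 : \bar R) - 1)%E; last by rewrite subee.
    congr (_ - _)%E; first exact: probability_setT.
    by rewrite setTI.
  rewrite -hT; apply: le_measure; rewrite ?inE.
  - exact: measurableD.
  - exact: measurableD.
  - by move=> w [he hn]; split.
transitivity (0 + P (cylS [:: y] `&` EvS x z b0 0 N))%E.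
  rewrite (measureDI P mE mC); congr (_ + _)%E; [exact: h0 | by rewrite setIC].
rewrite add0e h; congr EFin.
by rewrite /cyl_prob /= eqxx mul1r mul1r.
Qed.

End Meas.

Lemma evb_mono x z (f : nat -> int) N :
  evb x z true (mkseq f N.+2) -> evb x z true (mkseq f N.+1).
Proof.
move=> /evb_char [[i [hi hzi hj]]|[_ h]]; apply/evb_char.
  case: (pselect (exists i', (i' <= N)%N /\ z = (f i')%:E)) => [[i' [hi' hz']]|hn].
    case: (ltnP i' i) => hii.
      by left; exists i'; split => // j hj'; apply: hj; lia.
    case: (ltnP i N.+1) => hiN.
      by left; exists i; split => //; lia.
    by exfalso; lia.
  right; split => // i' hi'; split; first by move=> h; apply: hn; exists i'.
  apply: hj.
  case: (ltnP i' i) => // hii; exfalso; apply: hn; exists i; split => //.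
  by case: (ltnP i N.+1) => hiN; lia.
by right; split => // i hi; apply: h; lia.
Qed.


End Aux.
Import Aux.

Theorem mainTheorem14 (R : realType) (omega : int -> nat -> R)
  (x z : \bar int) (y1 y2 : int) (t : \bar R)
  (d1 d2 : measure_display) (T1 : measurableType d1) (T2 : measurableType d2)
  (P1 : probability T1 R) (P2 : probability T2 R)
  (X1 : nat -> T1 -> int) (X2 : nat -> T2 -> int) :
  cookie_env_plus omega ->
  (x <= y1%:E)%E -> y1 <= y2 -> (y2%:E <= z)%E -> (0 <= t)%E ->
  cookie_walk_law P1 omega y1 X1 ->
  cookie_walk_law P2 omega y2 X2 ->
  (P1 (hit_event X1 x z t) <= P2 (hit_event X2 x z t))%E.
Proof.
move=> hom hx h12 hz ht law1 law2.
have hw : in01 omega.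
  move=> u i; have /andP[h1 h2] := hom u i; rewrite h2 andbT.
  by apply: le_trans h1; rewrite divr_ge0 // ler01.
have hmono : forall (b0 : bool) N, gg x z b0%:R omega y1 N <= gg x z b0%:R omega y2 N.
  by move=> b0 N; apply: mono_gen => //; case: b0; [right|left].
case: t ht => [r| |] ht //.
  rewrite lee_fin in ht.
  have ev1 : hit_event X1 x z r%:E = EvS X1 x z false 0 (Num.truncn r) :=
    hit_event_fin X1 x z ht.
  have ev2 : hit_event X2 x z r%:E = EvS X2 x z false 0 (Num.truncn r) :=
    hit_event_fin X2 x z ht.
  by rewrite ev1 ev2 (prob_EvS law1) (prob_EvS law2) lee_fin.
have ev1 : hit_event X1 x z +oo%E = \bigcap_N EvS X1 x z true 0 N :=
  hit_event_inf R X1 x z.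
have ev2 : hit_event X2 x z +oo%E = \bigcap_N EvS X2 x z true 0 N :=
  hit_event_inf R X2 x z.
rewrite ev1 ev2.
set F := fun N => EvS X2 x z true 0 N.
have mF : forall N, measurable (F N) by move=> N; apply: (EvS_meas law2).
have mI : measurable (\bigcap_N F N) by apply: bigcapT_measurable.
have homo : {homo F : n m / (n <= m)%N >-> (m <= n)%O}.
  move=> n m /subnK <-; rewrite subsetEset.
  elim: (m - n)%N => [|k IH]; first by [].
  apply: subset_trans IH => w.
  exact: (@evb_mono x z (fun i => X2 (0 + i)%N w) (k + n)%N).
have fin : (P2 (F 0%N) < +oo)%E.
  by apply: (@le_lt_trans _ _ 1%E); [apply: probability_le1|exact: ltry].
have cv := nonincreasing_cvg_mu fin mF mI homo.
rewrite -(cvg_lim (@ereal_hausdorff R) cv).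
apply: lime_ge; first by apply/cvg_ex; eexists; exact: cv.
apply: nearW => N /=.
apply: (@le_trans _ _ (P1 (EvS X1 x z true 0 N))).
  apply: le_measure; rewrite ?inE.
  - by apply: bigcapT_measurable => n; apply: (EvS_meas law1).
  - exact: (EvS_meas law1).
  - by move=> w hw'; apply: hw'.
by rewrite /F (prob_EvS law1) (prob_EvS law2) lee_fin.
Qed.
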